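(* Let $W$ be a periodic infinite word with a period of length $N$ (i.e. $W=uuu\cdots$ with $|u|=N$). Then every Rauzy scheme for $W$ has scale strictly less than $N$.
   Context: $u\sqsubseteq w$: $u$ is a factor of $w$; $u\sqsubseteq_k w$: $u$ occurs in $w$ at least $k$ times. A graph with words is a strongly connected finite directed graph (multiple edges and loops allowed) in which every edge $e$ carries a front word $F(e)$ and a back word $B(e)$, and every vertex either has in-degree $1$ and out-degree $>1$ (distributing vertex) or in-degree $>1$ and out-degree $1$ (collecting vertex). A path is a finite nonempty sequence of edges $v_1\dots v_n$ with each $v_{i+1}$ starting where $v_i$ ends; subpaths and $s_1\sqsubseteq_k s_2$ are defined via edge records. A path is symmetric if its first edge starts at a collecting vertex and its last edge ends at a distributing vertex. For $s=v_1\dots v_n$, $F(s)$ is the concatenation, in order, of the front words of $v_1$ and of all $v_i$ ($i\ge2$) starting at a distributing vertex; $B(s)$ is the concatenation, in order, of the back words of all $v_i$ ($i\le n-1$) ending at a collecting vertex and of $v_n$. A Rauzy scheme for $W$ is a graph with words such that: (1) it has more than one edge; (2) front words of edges leaving a common distributing vertex have pairwise distinct first letters, and back words of edges entering a common collecting vertex have pairwise distinct last letters; (3) $F(s)=B(s)$ for every symmetric path $s$; (4) for symmetric paths $s_1,s_2$ and $k\ge1$, $F(s_1)\sqsubseteq_k F(s_2)$ implies $s_1\sqsubseteq_k s_2$; (5) all words on edges are factors of $W$; (6) every factor of $W$ is a factor of $F(s)$ for some symmetric path $s$; (7) for every edge $e$ there is a factor $u_e$ of $W$ such that every symmetric path $s$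 with $u_e\sqsubseteq F(s)$ passes through $e$. A support edge is an edge from a collecting vertex to a distributing vertex; the scale of $S$ is the minimum of $|F(v)|$ over support edges $v$. *)

(* Defs.v *)
From mathcomp Require Import all_boot.
Set Implicit Arguments. Unset Strict Implicit. Unset Printing Implicit Defensive.

Definition occ (T : eqType) (u w : seq T) : nat :=
  count (fun i => (i + size u <= size w) && (take (size u) (drop i w) == u))
        (iota 0 (size w).+1).

Definition occurs_k (T : eqType) (k : nat) (u w : seq T) : Prop := k <= occ u w.

Definition factor (T : eqType) (u w : seq T) : Prop := 0 < occ u w.

Definition factor_inf (A : eqType) (u : seq A) (W : nat -> A) : Prop :=
  exists i, forall j, j < size u -> W (i + j) = nth (W 0) u j.

Definition periodic_with_period (A : Type) (W : nat -> A) (N : nat) : Prop :=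
  exists u : seq A, size u = N /\ 0 < N /\
    forall i, W i = nth (W 0) u (i %% N).

Section Graph.
Variables (A : eqType) (V E : finType) (src tgt : E -> V) (Fw Bw : E -> seq A).

Definition indeg (v : V) : nat := #|[pred e | tgt e == v]|.
Definition outdeg (v : V) : nat := #|[pred e | src e == v]|.

Definition distributing (v : V) : bool := (indeg v == 1) && (1 < outdeg v).
Definition collecting (v : V) : bool := (1 < indeg v) && (outdeg v == 1).

Definition adj : rel V := fun v w => [exists e, (src e == v) && (tgt e == w)].

Definition graph_with_words : Prop :=
  (forall v w : V, connect adj v w) /\
  (forall v : V, distributing v || collecting v).

Definition is_path (s : seq E) : bool :=
  (s != [::]) && sorted (fun e f => tgt e == src f) s.

Definition symmetric_path (s : seq E) : bool :=
  match s with
  | [::] => false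
  | e :: s' => [&& is_path s, collecting (src e) & distributing (tgt (last e s'))]
  end.

Definition Fpath (s : seq E) : seq A :=
  match s with
  | [::] => [::]
  | e :: s' => Fw e ++ flatten [seq Fw x | x <- s' & distributing (src x)]
  end.

Definition Bpath (s : seq E) : seq A :=
  match s with
  | [::] => [::]
  | e :: s' => flatten [seq Bw x | x <- belast e s' & collecting (tgt x)]
               ++ Bw (last e s')
  end.

Definition support_edge (e : E) : bool := collecting (src e) && distributing (tgt e).

Definition distinct_first (w1 w2 : seq A) : Prop :=
  [/\ w1 != [::], w2 != [::] & ohead w1 != ohead w2].
Definition distinct_last (w1 w2 : seq A) : Prop :=
  distinct_first (rev w1) (rev w2).

Definition rauzy_scheme (W : nat -> A) : Prop :=
  graph_with_words /\
  (* (1) *) 1 < #|E| /\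
  (* (2) *) (forall e1 e2 : E, e1 != e2 -> src e1 = src e2 ->
               distributing (src e1) -> distinct_first (Fw e1) (Fw e2)) /\
            (forall e1 e2 : E, e1 != e2 -> tgt e1 = tgt e2 ->
               collecting (tgt e1) -> distinct_last (Bw e1) (Bw e2)) /\
  (* (3) *) (forall s, symmetric_path s -> Fpath s = Bpath s) /\
  (* (4) *) (forall s1 s2 k, symmetric_path s1 -> symmetric_path s2 -> 1 <= k ->
               occurs_k k (Fpath s1) (Fpath s2) -> occurs_k k s1 s2) /\
  (* (5) *) (forall e, factor_inf (Fw e) W /\ factor_inf (Bw e) W) /\
  (* (6) *) (forall u, factor_inf u W -> exists s, symmetric_path s /\ factor u (Fpath s)) /\
  (* (7) *) (forall e, exists u, factor_inf u W /\
               forall s, symmetric_path s -> factor u (Fpath s) -> e \in s).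

(* scale < N  <->  some support edge v has |F(v)| < N (the scale is the
   minimum of |F(v)| over support edges) *)
Definition scale_lt (N : nat) : Prop :=
  exists e, support_edge e /\ size (Fw e) < N.

End Graph.

(* Main.v *)
Require Import Defs.
From mathcomp Require Import all_boot.
From mathcomp Require Import zify.
Set Implicit Arguments. Unset Strict Implicit. Unset Printing Implicit Defensive.

Lemma Fpath_cat (A : eqType) (V E : finType) (src tgt : E -> V) (Fw : E -> seq A) p t :
  p != [::] -> Fpath src tgt Fw (p ++ t) =
  Fpath src tgt Fw p ++ flatten [seq Fw x | x <- t & distributing src tgt (src x)].
Proof. case: p => [|x p] //= _. by rewrite filter_cat map_cat flatten_cat catA. Qed.

Lemma Bpath_cat (A : eqType) (V E : finType) (src tgt : E -> V) (Bw : E -> seq A) p t :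
  t != [::] -> Bpath src tgt Bw (p ++ t) =
  flatten [seq Bw x | x <- p & collecting src tgt (tgt x)] ++ Bpath src tgt Bw t.
Proof.
case: t => [|y t] // _; case: p => [|x p] //=.
rewrite belast_cat /= last_cat /= -cat_rcons -lastI.
by rewrite filter_cat map_cat flatten_cat catA.
Qed.

Lemma prefQ (A : eqType) (V E : finType) (src tgt : E -> V) (Fw : E -> seq A) K :
  (forall e, size (Fw e) <= K) ->
  forall s, sorted (fun e f => tgt e == src f) s -> forall n,
  n + K < size (Fpath src tgt Fw s) ->
  exists p g t, s = rcons p g ++ t /\ distributing src tgt (tgt g) /\
    n <= size (Fpath src tgt Fw (rcons p g)) <= n + K.
Proof.
move=> HK s; elim/last_ind: s => [|s1 g IH] Hs n Hn; first by rewrite ltn0 in Hn.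
case: s1 IH Hs Hn => [|x s1] IH Hs Hn.
  by move: Hn; rewrite /= cats0 => Hn; have := HK g; lia.
rewrite -cats1 Fpath_cat // in Hn.
move: Hs; rewrite /= rcons_path => /andP [Hs /eqP Hl].
move: Hn; rewrite /=; case Hd: (distributing src tgt (src g)) => /= Hn.
  case: (ltnP (n + K) (size (Fpath src tgt Fw (x :: s1)))) => H.
    have [p [g' [t [E1 [E2 E3]]]]] := IH Hs n H.
    by exists p, g', (rcons t g); rewrite -rcons_cat -E1.
  exists (belast x s1), (last x s1), [:: g]; split; first by rewrite -lastI cats1.
  rewrite Hl Hd -lastI; split => //.
  move: Hn H; rewrite cats0 size_cat /= => Hn H; have := HK g; lia.
move: Hn; rewrite cats0 => Hn.
have [p [g' [t [E1 [E2 E3]]]]] := IH Hs n Hn.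
by exists p, g', (rcons t g); rewrite -rcons_cat -E1.
Qed.

Lemma suffQ (A : eqType) (V E : finType) (src tgt : E -> V) (Bw : E -> seq A) K :
  (forall e, size (Bw e) <= K) ->
  forall s, sorted (fun e f => tgt e == src f) s -> forall n,
  n + K < size (Bpath src tgt Bw s) ->
  exists p g t, s = p ++ g :: t /\ collecting src tgt (src g) /\
    n <= size (Bpath src tgt Bw (g :: t)) <= n + K.
Proof.
move=> HK s; elim: s => [|g s1 IH] Hs n Hn; first by rewrite ltn0 in Hn.
case: s1 IH Hs Hn => [|y s1] IH Hs Hn.
  by move: Hn; rewrite /= => Hn; have := HK g; lia.
rewrite -[g :: y :: s1]/([:: g] ++ y :: s1) Bpath_cat // in Hn.
move: Hs => /= /andP [/eqP Hl Hs].
have Eg : flatten [seq Bw x | x <- [:: g] & collecting src tgt (tgt x)] =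
  if collecting src tgt (tgt g) then Bw g else [::].
  by rewrite /=; case: ifP => //= _; rewrite cats0.
rewrite Eg in Hn; move: Hn; case Hc: (collecting src tgt (tgt g)) => Hn.
  case: (ltnP (n + K) (size (Bpath src tgt Bw (y :: s1)))) => H.
    have [p [g' [t [E1 [E2 E3]]]]] := IH Hs n H.
    by exists (g :: p), g', t; rewrite E1.
  exists [:: g], y, s1; rewrite -Hl Hc; split; first by []; split; first by [].
  change (n <= size (Bpath src tgt Bw (y :: s1)) <= n + K).
  move: Hn; rewrite size_cat => Hn; have := HK g; lia.
have [p [g' [t [E1 [E2 E3]]]]] := IH Hs n Hn.
by exists (g :: p), g', t; rewrite E1.
Qed.


Lemma sym_pre (V E : finType) (src tgt : E -> V) (s p t : seq E) g :
  symmetric_path src tgt s -> s = rcons p g ++ t -> distributing src tgt (tgt g) ->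
  symmetric_path src tgt (rcons p g).
Proof.
move=> Hs Hst Hd; move: Hs; rewrite Hst {Hst}.
case: p => [|h p] /=.
  by case/and3P => _ Hc _; rewrite /is_path /= Hc Hd.
case/and3P => /andP [_ Hsort] Hc _.
rewrite /is_path /= Hc last_rcons Hd /= andbT.
have := Hsort; rewrite -cat_cons => /cat_sorted2 [] //.
Qed.

Lemma sym_suf (V E : finType) (src tgt : E -> V) (s p t : seq E) g :
  symmetric_path src tgt s -> s = p ++ g :: t -> collecting src tgt (src g) ->
  symmetric_path src tgt (g :: t).
Proof.
move=> Hs Hst Hc; move: Hs; rewrite Hst {Hst}.
case: p => [|h p] //=.
case/and3P => /andP [_ Hsort] _ Hd.
rewrite /is_path /= Hc.
move: Hd; rewrite last_cat /= => -> ; rewrite andbT.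
have := Hsort; rewrite -cat_cons => /cat_sorted2 [] //.
Qed.

Lemma sym_prefix (A : eqType) (V E : finType) (src tgt : E -> V) (Fw : E -> seq A) K :
  (forall e, size (Fw e) <= K) -> forall s n,
  symmetric_path src tgt s -> n <= size (Fpath src tgt Fw s) ->
  exists p t, s = p ++ t /\ symmetric_path src tgt p /\
    n <= size (Fpath src tgt Fw p) <= n + K.
Proof.
move=> HK s n Hs Hn.
case: (leqP (size (Fpath src tgt Fw s)) (n + K)) => H.
  by exists s, [::]; rewrite cats0 Hs Hn H.
have Hsort : sorted (fun e f => tgt e == src f) s.
  by case: s Hs {Hn H} => // h s /and3P [/andP [_ H1] _ _].
have [p [g [t [E1 [E2 E3]]]]] := prefQ HK Hsort H.
exists (rcons p g), t; split => //; split => //.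
exact: sym_pre Hs E1 E2.
Qed.

Lemma sym_suffix (A : eqType) (V E : finType) (src tgt : E -> V) (Bw : E -> seq A) K :
  (forall e, size (Bw e) <= K) -> forall s n,
  symmetric_path src tgt s -> n <= size (Bpath src tgt Bw s) ->
  exists p t, s = p ++ t /\ t != [::] /\ symmetric_path src tgt t /\
    n <= size (Bpath src tgt Bw t) <= n + K.
Proof.
move=> HK s n Hs Hn.
case: (leqP (size (Bpath src tgt Bw s)) (n + K)) => H.
  exists [::], s; rewrite Hs Hn H; split => //; split => //.
  by case: s Hs {Hn H}.
have Hsort : sorted (fun e f => tgt e == src f) s.
  by case: s Hs {Hn H} => // h s /and3P [/andP [_ H1] _ _].
have [p [g [t [E1 [E2 E3]]]]] := suffQ HK Hsort H.
exists p, (g :: t); split => //; split => //; split => //.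
exact: sym_suf Hs E1 E2.
Qed.


Lemma localize (A : eqType) (V E : finType) (src tgt : E -> V) (Fw Bw : E -> seq A) K :
  (forall e, size (Fw e) <= K) -> (forall e, size (Bw e) <= K) ->
  (forall s, symmetric_path src tgt s -> Fpath src tgt Fw s = Bpath src tgt Bw s) ->
  forall s r n, symmetric_path src tgt s -> r <= n -> n <= size (Fpath src tgt Fw s) ->
  exists t j m, symmetric_path src tgt t /\
    Fpath src tgt Fw t = drop j (take m (Fpath src tgt Fw s)) /\
    j <= r /\ r <= j + K /\ n <= m /\ m <= n + K /\ m <= size (Fpath src tgt Fw s).
Proof.
move=> HF HB H3 s r n Hs Hrn Hn.
have [p [t0 [Es [Hp Hpn]]]] := sym_prefix HF Hs Hn.
have pnil : p != [::] by case: p Hp {Es Hpn}.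
have EFs := Fpath_cat src tgt Fw t0 pnil.
rewrite -Es in EFs.
have Hmr : size (Fpath src tgt Fw p) - r <= size (Bpath src tgt Bw p).
  by rewrite -H3 // leq_subr.
have [p0 [t [Ep [tnil [Ht Htn]]]]] := sym_suffix HB Hp Hmr.
have EBp := Bpath_cat src tgt Bw p0 tnil.
rewrite -Ep in EBp.
set X := flatten _ in EBp.
exists t, (size X), (size (Fpath src tgt Fw p)).
have Hsz : size (Fpath src tgt Fw p) = size X + size (Bpath src tgt Bw t).
  by rewrite H3 // EBp size_cat.
split => //; split.
  by rewrite EFs take_size_cat // (H3 p) // EBp drop_size_cat // H3.
move: Hpn Htn; rewrite EFs size_cat; lia.
Qed.


Lemma factorP (T : eqType) (u w : seq T) :
  factor u w <-> exists r, r + size u <= size w /\ take (size u) (drop r w) = u.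
Proof.
rewrite /factor /occ -has_count; split.
  by move/hasP => [r _ /andP [H1 /eqP H2]]; exists r.
move=> [r [H1 H2]]; apply/hasP; exists r; last by rewrite H1 H2 eqxx.
rewrite mem_iota add0n ltnS; lia.
Qed.

Lemma nth_cat_sz (T : Type) (x0 : T) (s1 s2 : seq T) k :
  nth x0 (s1 ++ s2) (size s1 + k) = nth x0 s2 k.
Proof. by rewrite nth_cat ltnNge leq_addr /= addKn. Qed.

Lemma key (A : eqType) (V E : finType) (src tgt : E -> V) (Fw Bw : E -> seq A)
  (W : nat -> A) N K e f :
  (forall m, W (m + N) = W m) -> 0 < N ->
  (forall e, size (Fw e) <= K) -> (forall e, size (Bw e) <= K) ->
  (forall s, symmetric_path src tgt s -> Fpath src tgt Fw s = Bpath src tgt Bw s) ->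
  (forall u, factor_inf u W -> exists s, symmetric_path src tgt s /\ factor u (Fpath src tgt Fw s)) ->
  (exists u, factor_inf u W /\
     forall s, symmetric_path src tgt s -> factor u (Fpath src tgt Fw s) -> f \in s) ->
  support_edge src tgt e -> N <= size (Fw e) -> src f = tgt e ->
  indeg tgt (tgt e) = 1 -> Fw f != [::] ->
  nth (W 0) (Fw f) 0 = nth (W 0) (Fw e) (size (Fw e) - N).
Proof.
move=> per HN HF HB H3 H6 [u [[i Hu] H7]] He Hw Hfe Hin Hfne.
have perk : forall k m, W (m + k * N) = W m.
  elim=> [|k IH] m; first by rewrite mul0n addn0.
  by rewrite mulSn addnA IH per.
set b := i + K * N - K.
have Hb : b + K = i + K * N by rewrite /b subnK //; nia.
set x := mkseq (fun k => W (b + k)) (K + size u + K).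
have Hx : factor_inf x W.
  by exists b => j Hj; rewrite nth_mkseq //; rewrite size_mkseq in Hj.
have [s [Hs /factorP [q [Hq1 Hq2]]]] := H6 x Hx.
have Hszx : size x = K + size u + K by rewrite size_mkseq.
set Fs := Fpath src tgt Fw s in Hq1 Hq2.
have Hn : q + K + size u <= size Fs by lia.
have [t [j [m [Ht [EFt [Hj1 [Hj2 [Hm1 [Hm2 Hm3]]]]]]]]] :=
  localize HF HB H3 Hs (leq_addr (size u) (q + K)) Hn.
set Ft := Fpath src tgt Fw t in EFt.
have HszFt : size Ft = m - j by rewrite EFt size_drop size_take; case: ltnP; lia.
have Hwin : forall k, k < size Ft -> nth (W 0) Ft k = W (b + (j - q) + k).
  move=> k Hk; rewrite EFt nth_drop nth_take; last by lia.
  have -> : j + k = q + (j + k - q) by lia.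
  rewrite -nth_drop -(nth_take (W 0) (_ : j + k - q < size x)); last by lia.
  by rewrite Hq2 nth_mkseq; [congr W; lia | lia].
have Hut : factor u Ft.
  apply/factorP; exists (q + K - j); split; first by lia.
  have Hsz : size (take (size u) (drop (q + K - j) Ft)) = size u.
    by rewrite size_takel // size_drop; lia.
  apply: (@eq_from_nth _ (W 0)) => // k; rewrite Hsz => Hk'.
  rewrite nth_take // nth_drop Hwin; last by lia.
  rewrite -Hu //; have -> : b + (j - q) + (q + K - j + k) = (b + K) + k by lia.
  by rewrite Hb addnAC perk.
have Hft := H7 t Ht Hut.
have [p1 [p2 Et]] : exists p1 p2, t = p1 ++ f :: p2.
  by case/splitPr: Hft => p1 p2; exists p1, p2.
have /andP [Hce Hde] := He.
have Hsort : sorted (fun e f => tgt e == src f) t.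
  by case: t Ht {EFt Ft HszFt Hwin Hut Hft Et} => // h t' /and3P [/andP [_ H1] _ _].
case/lastP: p1 Et => [|p1 g] Et.
  move: Ht; rewrite Et /= => /and3P [_ Hc _].
  by move: Hc Hde; rewrite Hfe /collecting /distributing => /andP [H1 /eqP H2] /andP [/eqP H3' _]; lia.
have Hg : tgt g = tgt e.
  move: Hsort; rewrite Et -cats1 -catA /= => /cat_sorted2 [_] /= /andP [/eqP -> _].
  exact: Hfe.
have Hge : g = e.
  have [y Hy] := mem_card1 Hin.
  have := Hy g; have := Hy e; rewrite !inE Hg eqxx => /esym/eqP -> /esym/eqP ->.
  by [].
subst g.
have Hsa : symmetric_path src tgt (rcons p1 e) by apply: sym_pre Ht Et Hde.
have Hbe : Bw e = Fw e.
  have := H3 [:: e]; rewrite /= cats0 => <- //.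
have EFa : Fpath src tgt Fw (rcons p1 e) =
    flatten [seq Bw x | x <- p1 & collecting src tgt (tgt x)] ++ Fw e.
  by rewrite H3 // -cats1 Bpath_cat //= Hbe.
have EFt2 : Ft = flatten [seq Bw x | x <- p1 & collecting src tgt (tgt x)] ++
    (Fw e ++ (Fw f ++ flatten [seq Fw x | x <- p2 & distributing src tgt (src x)])).
  by rewrite /Ft Et Fpath_cat ?EFa /= ?Hfe ?Hde -?catA // -cats1; case: (p1).
set Y := flatten _ in EFt2.
have Hszf : size Ft = size Y + (size (Fw e) + (size (Fw f) +
    size (flatten [seq Fw x | x <- p2 & distributing src tgt (src x)]))).
  by rewrite EFt2 !size_cat.
have Hf0 : 0 < size (Fw f) by case: (Fw f) Hfne.
have E1 : nth (W 0) Ft (size Y + size (Fw e)) = nth (W 0) (Fw f) 0.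
  rewrite EFt2 nth_cat_sz.
  by rewrite nth_cat ltnn subnn nth_cat Hf0.
have E2 : nth (W 0) Ft (size Y + (size (Fw e) - N)) = nth (W 0) (Fw e) (size (Fw e) - N).
  rewrite EFt2 nth_cat_sz nth_cat.
  have -> : size (Fw e) - N < size (Fw e) by lia.
  by [].
rewrite -E1 -E2 !Hwin; try lia.
have -> : b + (j - q) + (size Y + size (Fw e)) = (b + (j - q) + (size Y + (size (Fw e) - N))) + N by lia.
by rewrite per.
Qed.


Lemma support_exists (V E : finType) (src tgt : E -> V) :
  (forall v, distributing src tgt v || collecting src tgt v) ->
  forall s, symmetric_path src tgt s -> exists e, support_edge src tgt e.
Proof.
move=> Hdich [|g s] // /and3P [/andP [_ Hp] Hc Hd].
elim: s g Hp Hc Hd => [|h s IH] g Hp Hc Hd.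
  by exists g; rewrite /support_edge Hc.
case Hdg : (distributing src tgt (tgt g)).
  by exists g; rewrite /support_edge Hc Hdg.
move: Hp => /= /andP [/eqP Hgh Hp].
apply: (IH h Hp) => //.
by have := Hdich (tgt g); rewrite Hdg /= Hgh.
Qed.

Theorem corollary6p9 (A : eqType) (W : nat -> A) (N : nat)
  (V E : finType) (src tgt : E -> V) (Fw Bw : E -> seq A) :
  periodic_with_period W N ->
  rauzy_scheme src tgt Fw Bw W ->
  scale_lt src tgt Fw N.
Proof.
move=> [u0 [Hsz [HN Hper]]] [[Hconn Hdich] [H1 [H2a [H2b [H3 [H4 [H5 [H6 H7]]]]]]]].
have per : forall m, W (m + N) = W m by move=> m; rewrite (Hper (m + N)) (Hper m) modnDr.
case: (boolP [exists e, support_edge src tgt e && (size (Fw e) < N)]).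
  by move/existsP => [e /andP [He Hs]]; exists e.
move/existsPn => Hno; exfalso.
have Hfi : factor_inf [::] W by exists 0.
have [s [Hs _]] := H6 [::] Hfi.
have [e He] := support_exists Hdich Hs.
have Hw : N <= size (Fw e) by have := Hno e; rewrite He /= -leqNgt.
have /andP [Hce Hde] := He.
have /andP [/eqP Hin Hout] := Hde.
have [f1 [f2 [Hf1 Hf2 Hne]]] := card_gt1P Hout.
move: Hf1 Hf2; rewrite !inE => /eqP Hf1 /eqP Hf2.
have Hs12 : src f1 = src f2 by rewrite Hf1 Hf2.
have Hd1 : distributing src tgt (src f1) by rewrite Hf1.
have [Hn1 Hn2 Hoh] := H2a f1 f2 Hne Hs12 Hd1.
set K := \max_(x : E) (size (Fw x) + size (Bw x)).
have HF : forall x, size (Fw x) <= K.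
  by move=> x; apply: leq_trans (leq_bigmax x); apply: leq_addr.
have HB : forall x, size (Bw x) <= K.
  by move=> x; apply: leq_trans (leq_bigmax x); apply: leq_addl.
have k1 := key per HN HF HB H3 H6 (H7 f1) He Hw Hf1 Hin Hn1.
have k2 := key per HN HF HB H3 H6 (H7 f2) He Hw Hf2 Hin Hn2.
move: Hoh k1 k2; case: (Fw f1) Hn1 => // a1 l1 _; case: (Fw f2) Hn2 => // a2 l2 _ /=.
by move=> Hne12 k1 k2; move: Hne12; rewrite k1 k2 eqxx.
Qed.
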